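(* For positive semidefinite matrices $A,B$ of the same size, $$\operatorname{tr}(A+B)^4-\operatorname{tr}(A^4+B^4)\ge(2^4-2)\operatorname{tr}(A^{1/2}BA^{1/2})^{2}=14\operatorname{tr}(AB)^2.$$ *)

(* Defs.v *)
From HB Require Import structures.
From mathcomp Require Import all_boot all_order all_algebra.
Set Implicit Arguments. Unset Strict Implicit. Unset Printing Implicit Defensive.
Import Order.TTheory GRing.Theory Num.Theory.
Local Open Scope ring_scope.

Definition psdmx (C : numClosedFieldType) (n : nat) (A : 'M[C]_n) : Prop :=
  (map_mx Num.conj A)^T = A /\
  forall v : 'cV[C]_n, 0 <= ((map_mx Num.conj v)^T *m A *m v) 0 0.

(* Main.v *)
Require Import Defs.
From HB Require Import structures.
From mathcomp Require Import all_boot all_order all_algebra.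
From mathcomp Require Import ring.
Import Order.TTheory GRing.Theory Num.Theory.
Local Open Scope ring_scope.
Local Open Scope sesquilinear_scope.
Import Num.Def.

Section S.
Variables (C : numClosedFieldType) (n : nat).

Lemma psd_herm (P : 'M[C]_n) : psdmx P -> P \is hermsymmx.
Proof.
by case=> hP _; rewrite is_hermitianmxE /= expr0 scale1r -map_trmx hP.
Qed.

Lemma psd_diag (P : 'M[C]_n) (U : 'M[C]_n) i :
  psdmx P -> 0 <= (U *m P *m U^t*) i i.
Proof.
case=> _ hP; have := hP ((row i U)^t*).
have -> : (map_mx Num.conj (row i U ^t*))^T = row i U.
  by apply/matrixP => a b; rewrite !mxE conjCK.
suff -> : (U *m P *m U^t*) i i = (row i U *m P *m (row i U)^t*) 0 0 by [].
have -> : (row i U)^t* = col i (U^t*) by apply/matrixP => a b; rewrite !mxE.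
rewrite -!row_mul !mxE; apply: eq_bigr => k _; rewrite !mxE.
by [].
Qed.

Lemma tr_psd (P Q : 'M[C]_n) : psdmx P -> psdmx Q -> 0 <= \tr (P *m Q).
Proof.
move=> hP hQ.
have /hermitian_normalmx /orthomx_spectralP E := psd_herm P hP.
set U := spectralmx P in E; set d := spectral_diag P in E.
have Uu : U \is unitarymx := spectral_unitarymx P.
have UU : U *m U^t* = 1%:M by apply/unitarymxP.
rewrite invmx_unitary // in E.
have Dd : diag_mx d = U *m P *m U^t*.
  by rewrite E !mulmxA UU mul1mx -mulmxA UU mulmx1.
rewrite E -!mulmxA mxtrace_mulC -!mulmxA mxtrace_mulC !mulmxA.
rewrite /mxtrace; apply: sumr_ge0 => i _.
rewrite mul_mx_diag mxE; apply: mulr_ge0; first exact: psd_diag.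
have := psd_diag P U i hP; by rewrite -Dd mxE eqxx mulr1n.
Qed.

Lemma starM m p q (X : 'M[C]_(m, p)) (Y : 'M[C]_(p, q)) :
  (map_mx Num.conj (X *m Y))^T = (map_mx Num.conj Y)^T *m (map_mx Num.conj X)^T.
Proof. by rewrite map_mxM trmx_mul. Qed.

Lemma psd_conj (B N : 'M[C]_n) : (map_mx Num.conj N)^T = N -> psdmx B ->
  psdmx (N *m B *m N).
Proof.
move=> hN [hB hB']; split; first by rewrite !starM hN hB mulmxA.
move=> v; have := hB' (N *m v).
by rewrite starM hN !mulmxA.
Qed.

Lemma tr_sq (K : 'M[C]_n) : 0 <= \tr (K *m (map_mx Num.conj K)^T).
Proof.
rewrite /mxtrace; apply: sumr_ge0 => i _; rewrite mxE; apply: sumr_ge0 => j _.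
rewrite !mxE; exact: mul_conjC_ge0.
Qed.

Lemma r1 (x y z w : 'M[C]_n) : \tr (x * y * z * w) = \tr (y * z * w * x).
Proof. by have := mxtrace_mulC x (y * z * w); rewrite !mulmxE !mulrA. Qed.

Lemma trN (X : 'M[C]_n) : \tr (- X) = - \tr X.
Proof. exact: raddfN. Qed.

Lemma key (A B : 'M[C]_n) :
  \tr ((A + B) ^+ 4) - \tr (A ^+ 4 + B ^+ 4) - 14%:R * \tr ((A *m B) ^+ 2)
  = 4%:R * \tr (A *m ((A - B) *m B *m (A - B))) + 6%:R * \tr ((A *m B - B *m A) *m (B *m A - A *m B)).
Proof.
rewrite !mulmxE !exprS expr0 !mulr1.
move E14: (14%:R : C) => c14; move E4: (4%:R : C) => c4; move E6: (6%:R : C) => c6.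
rewrite !(mulrDl, mulrDr, mulrBl, mulrBr, mulrN, mulNr, opprK) !mulrA. rewrite !mxtraceD !trN.
have e1 : \tr (A * A * B * A) = \tr (A * A * A * B) by rewrite [LHS]r1 [LHS]r1 [LHS]r1.
have e2 : \tr (A * B * A * A) = \tr (A * A * A * B) by rewrite [LHS]r1 [LHS]r1.
have e3 : \tr (B * A * A * A) = \tr (A * A * A * B) by rewrite [LHS]r1.
have e4 : \tr (B * A * B * B) = \tr (A * B * B * B) by rewrite [LHS]r1.
have e5 : \tr (B * B * A * B) = \tr (A * B * B * B) by rewrite [LHS]r1 [LHS]r1.
have e6 : \tr (B * B * B * A) = \tr (A * B * B * B) by rewrite [LHS]r1 [LHS]r1 [LHS]r1.
have e7 : \tr (A * B * B * A) = \tr (A * A * B * B) by rewrite [LHS]r1 [LHS]r1 [LHS]r1.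
have e8 : \tr (B * B * A * A) = \tr (A * A * B * B) by rewrite [LHS]r1 [LHS]r1.
have e9 : \tr (B * A * A * B) = \tr (A * A * B * B) by rewrite [LHS]r1.
have e10 : \tr (B * A * B * A) = \tr (A * B * A * B) by rewrite [LHS]r1.
rewrite e1 e2 e3 e4 e5 e6 e7 e8 e9 e10.
rewrite -E14 -E4 -E6; ring.
Qed.
End S.

Theorem mainTheorem13 (C : numClosedFieldType) (n : nat) (A B : 'M[C]_n)
  (hA : psdmx A) (hB : psdmx B) :
  14%:R * \tr ((A *m B) ^+ 2)
    <= \tr ((A + B) ^+ 4) - \tr (A ^+ 4 + B ^+ 4).
Proof.
rewrite -subr_ge0 key; case: (hA) => hA1 _; case: (hB) => hB1 _.
apply: addr_ge0; apply: mulr_ge0; try exact: ler0n.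
  apply: tr_psd => //; apply: psd_conj => //.
  rewrite map_mxB linearB /=; exact: (congr2 (fun x y => x - y) hA1 hB1).
have E : (map_mx Num.conj (A *m B - B *m A))^T = B *m A - A *m B.
  rewrite map_mxB linearB /= !starM.
  exact: (congr2 (fun x y => x - y) (congr2 mulmx hB1 hA1) (congr2 mulmx hA1 hB1)).
have := @tr_sq C n (A *m B - B *m A); rewrite E; exact.
Qed.
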